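(* Assume that predictions are made at $n_p$ locations $s_{p,1},\dots,s_{p,n_p}$ with covariate data $X_p$. When applying the Vecchia approximation to the joint response vector $(y_p,y)^T$ with the predicted response $y_p$ appearing first in the ordering, the conditional distribution $y_p|y$ is given by \[y_p|y\sim \mathcal{N} \left( \mu_p , \Xi_p\right),\] with \begin{equation*} \begin{split} \mu_p=& F(X_p)- \left(B_p^T{D_p}^{-1}B_p + B_{op}^T{D_o}^{-1}B_{op}\right)^{-1}B_{op}^T{D_o}^{-1}B_o\left(y-F(X)\right)\\ \Xi_p=& \left(B_p^T{D_p}^{-1}B_p + B_{op}^T{D_o}^{-1}B_{op}\right)^{-1}, \end{split} \end{equation*} where $B_{o},D_o\in\mathbb{R}^{n\times n}$, $B_{op}\in\mathbb{R}^{n\times n_p}$, $B_p,D_p\in\mathbb{R}^{n_p\times n_p}$ are the following submatrices of the Vecchia approximated precision matrix $\tilde{Cov}\left((y_p,y)^T\right)^{-1}$: $$ \tilde{Cov}\left((y_p,y)^T\right)^{-1}= \begin{pmatrix} B_p & 0 \\ B_{op}&B_o\end{pmatrix}^T \begin{pmatrix} {D_p}^{-1} & 0 \\0&{D_o}^{-1}\end{pmatrix} \begin{pmatrix} B_p & 0 \\ B_{op}&B_o\end{pmatrix}. $$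
   Context: Model: $y=F(X)+Zb+\epsilon$, $b\sim\mathcal{N}(0,\Sigma)$, $\epsilon\sim\mathcal{N}(0,\sigma^2 I_n)$, with $y\in\mathbb{R}^n$, where $b$ contains a Gaussian process with covariance function $c(\cdot,\cdot)$. Vecchia approximation of a response vector with given ordering: $p(y|F,\theta)\approx\prod_{i} p(y_i|y_{N(i)},F,\theta)$, where $N(i)$ are the indices of the nearest neighbors of location $i$ among earlier locations in the ordering; $p(y_i|y_{N(i)},F,\theta)=\mathcal{N}(y_i\mid F_i+A_i(y_{N(i)}-F_{N(i)}),D_i)$ with $A_i=(Z\Sigma Z^T)_{i,N(i)}((Z\Sigma Z^T+\sigma^2I)_{N(i)})^{-1}$ and $D_i=(Z\Sigma Z^T+\sigma^2I)_{i,i}-A_i(Z\Sigma Z^T)_{N(i),i}$. The Cholesky-type factor is the lower triangular matrix with $1$'s on the diagonal and entries $-A_i$ in positions $(i,N(i))$, and the diagonal matrix has entries $D_i$; the approximate precision is (factor)$^T$(diagonal)$^{-1}$(factor). Here this construction is applied to the joint vector $(y_p,y)$ of the prediction variable $y_p\in\mathbb{R}^{n_p}$ (following the same model at the prediction locations) and the observed response $y$, and the resulting factors are partitioned into blocks as in the claim. *)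

(* Defs.v *)
From HB Require Import structures.
From mathcomp Require Import all_boot all_order all_algebra.
From mathcomp Require Import all_classical all_reals all_analysis.
Set Implicit Arguments. Unset Strict Implicit. Unset Printing Implicit Defensive.
Import Order.TTheory GRing.Theory Num.Theory.
Local Open Scope ring_scope.

(* F(X): the vector (F(x_1),...,F(x_k))^T for the covariate rows of X *)
Definition fmean (R : realType) (p k : nat) (F : 'rV[R]_p -> R) (X : 'M[R]_(k, p))
  : 'cV[R]_k := \col_i F (row i X).

Definition dist2 (R : realType) (d : nat) (a b : 'rV[R]_d) : R :=
  \sum_(k < d) (a 0 k - b 0 k) ^+ 2.

Definition nn_sets (R : realType) (N d : nat) (s : 'I_N -> 'rV[R]_d) (m : nat)
  (Nb : 'I_N -> {set 'I_N}) : Prop :=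
  forall i : 'I_N,
    [/\ Nb i \subset [set j : 'I_N | (j < i)%N],
        #|Nb i| = minn m i
      & forall j j' : 'I_N, j \in Nb i -> (j' < i)%N -> j' \notin Nb i ->
          dist2 (s j) (s i) <= dist2 (s j') (s i)].

Definition psd (R : realType) (k : nat) (M : 'M[R]_k) : Prop :=
  M^T = M /\ forall x : 'cV[R]_k, 0 <= (x^T *m M *m x) 0 0.

Definition posdef (R : realType) (k : nat) (M : 'M[R]_k) : Prop :=
  M^T = M /\ forall x : 'cV[R]_k, x != 0 -> 0 < (x^T *m M *m x) 0 0.

Definition gauss1 (R : realType) (mu s2 x : R) : R :=
  (Num.sqrt (2 * pi * s2))^-1 * expR (- (x - mu) ^+ 2 / (2 * s2)).

Definition mvn_pdf (R : realType) (k : nat) (mu : 'cV[R]_k) (Xi : 'M[R]_k)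
  (x : 'cV[R]_k) : R :=
  (Num.sqrt ((2 * pi) ^+ k * \det Xi))^-1 *
  expR (- (1 / 2) * ((x - mu)^T *m invmx Xi *m (x - mu)) 0 0).

Section Vecchia.
Variables (R : realType) (N m : nat) (Z : 'M[R]_(N, m)) (Sigma : 'M[R]_m)
  (sigma2 : R) (Nb : 'I_N -> {set 'I_N}).

Definition Kmat : 'M[R]_N := Z *m Sigma *m Z^T.
Definition Cmat : 'M[R]_N := Kmat + sigma2%:M.

Definition nbi (i : 'I_N) (l : 'I_#|Nb i|) : 'I_N := enum_val l.

Definition vA (i : 'I_N) : 'rV[R]_#|Nb i| :=
  (\row_l Kmat i (nbi l)) *m invmx (\matrix_(l, l') Cmat (nbi l) (nbi l')).

Definition vD (i : 'I_N) : R :=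
  Cmat i i - (vA i *m (\col_l Kmat (nbi l) i)) 0 0.

(* the lower-triangular factor: 1 on the diagonal, -A_i at (i, N(i)) *)
Definition vB : 'M[R]_N :=
  \matrix_(i, j) ((i == j)%:R - \sum_(l < #|Nb i| | nbi l == j) vA i 0 l).

Definition vDm : 'M[R]_N := diag_mx (\row_i vD i).

Definition vQ : 'M[R]_N := vB^T *m invmx vDm *m vB.

Definition vecchia_density (mu v : 'cV[R]_N) : R :=
  \prod_(i < N) gauss1 (mu i 0 + (vA i *m \col_l (v (nbi l) 0 - mu (nbi l) 0)) 0 0)
                       (vD i) (v i 0).

End Vecchia.

(* Main.v *)
Require Import Defs.
From HB Require Import structures.
From mathcomp Require Import all_boot all_order all_algebra.
From mathcomp Require Import all_classical all_reals all_analysis.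
From mathcomp Require Import ring.
Import Order.TTheory GRing.Theory Num.Theory.
Local Open Scope ring_scope.
Set Implicit Arguments. Unset Strict Implicit.

Section PD.
Variable R : realType.

Lemma block_sym p1 p2 (M : 'M[R]_(p1 + p2)) : M^T = M ->
  [/\ (ulsubmx M)^T = ulsubmx M, (dlsubmx M)^T = ursubmx M,
      (ursubmx M)^T = dlsubmx M & (drsubmx M)^T = drsubmx M].
Proof.
move=> MT; have := MT; rewrite -[in LHS](submxK M) tr_block_mx -{5}(submxK M).
by case/eq_block_mx=> -> -> -> ->.
Qed.

Lemma ul_posdef p1 p2 (M : 'M[R]_(p1 + p2)) : posdef M -> posdef (ulsubmx M).
Proof.
case=> MT Mp; have [h1 _ _ _] := block_sym MT; split=> // x x0.
have := Mp (col_mx x 0); rewrite col_mx_eq0 negb_and x0 => /(_ isT).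
rewrite -mulmxA -{1}(submxK M) mul_block_col tr_col_mx mul_row_col !mulmx0 addr0.
by rewrite trmx0 mul0mx addr0 mulmxA.
Qed.

Lemma schur p1 p2 (M : 'M[R]_(p1 + p2)) : posdef M -> ulsubmx M \in unitmx ->
  posdef (drsubmx M - dlsubmx M *m invmx (ulsubmx M) *m ursubmx M) /\
  \det M = \det (ulsubmx M) * \det (drsubmx M - dlsubmx M *m invmx (ulsubmx M) *m ursubmx M).
Proof.
case=> MT Mp Au; have [hA hc hb hD] := block_sym MT.
set A := ulsubmx M in hA Au *; set b := ursubmx M in hc hb *;
set c := dlsubmx M in hc hb *; set Dm := drsubmx M in hD *.
have EM : M = block_mx A b c Dm by rewrite submxK.
split.
  split.
    by rewrite linearD /= linearN /= !trmx_mul trmx_inv hA hb hc hD mulmxA.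
  move=> x x0.
  set u := - (invmx A *m b *m x).
  have := Mp (col_mx u x); rewrite col_mx_eq0 negb_and x0 orbT => /(_ isT).
  rewrite -mulmxA {1}EM mul_block_col tr_col_mx mul_row_col.
  have -> : A *m u + b *m x = 0.
    by rewrite /u mulmxN !mulmxA mulmxV // mul1mx addNr.
  rewrite mulmx0 add0r /u mulmxN mulmxDr mulmxN mulmxBr mulmxBl !mulmxA.
  by rewrite addrC.
pose L := block_mx (1%:M : 'M[R]_p1) 0 (- (c *m invmx A)) (scalar_mx 1 : 'M[R]_p2).
have LM : L *m M = block_mx A b 0 (Dm - c *m invmx A *m b).
  rewrite EM mulmx_block !mul1mx !mul0mx !addr0 mulNmx.
  by rewrite -(mulmxA c (invmx A) A) mulVmx // mulmx1 addNr mulNmx addrC.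
have := congr1 determinant LM; rewrite det_mulmx det_ublock det_lblock !det1 !mul1r.
by move=> ->.
Qed.

Lemma posdef_det k (M : 'M[R]_k) : posdef M -> 0 < \det M.
Proof.
elim: k M => [|k IH] M pM; first by rewrite det_mx00.
have pA := ul_posdef (M := (M : 'M[R]_(1 + k))) pM.
have A0 : 0 < ulsubmx (M : 'M[R]_(1 + k)) 0 0.
  case: pA => _ /(_ 1%:M); rewrite oner_eq0 => /(_ isT).
  by rewrite trmx1 mul1mx mulmx1.
have Au : ulsubmx (M : 'M[R]_(1 + k)) \in unitmx.
  by rewrite unitmxE det_mx11 unitfE gt_eqF.
have [pS ->] := schur (M := (M : 'M[R]_(1 + k))) pM Au.
by rewrite det_mx11 mulr_gt0 // IH.
Qed.

Lemma posdef_unit k (M : 'M[R]_k) : posdef M -> M \in unitmx.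
Proof. by move=> /posdef_det d; rewrite unitmxE unitfE gt_eqF. Qed.

End PD.


Section Gen.
Variable R : realType.

Lemma sumsq_gt0 k (x : 'cV[R]_k) : x != 0 -> 0 < (x^T *m x) 0 0.
Proof.
move=> x0; have [i xi] : exists i, x i 0 != 0.
  apply/existsP; apply: contraR x0; rewrite negb_exists => /forallP H.
  apply/eqP/matrixP=> a b; rewrite (ord1 b) !mxE; exact/eqP/negPn/H.
rewrite mxE (bigD1 i) //= ltr_pwDl //.
  by rewrite mxE -expr2 lt_def sqr_ge0 andbT sqrf_eq0 xi.
by apply: sumr_ge0 => j _; rewrite mxE -expr2 sqr_ge0.
Qed.

Lemma inv_posdef k (M : 'M[R]_k) : posdef M -> posdef (invmx M).
Proof.
move=> pM; have Mu := posdef_unit pM; case: pM => MT Mp; split.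
  by rewrite trmx_inv MT.
move=> x x0; set y := invmx M *m x.
have y0 : y != 0.
  apply: contraNneq x0 => y0; by rewrite -[x]mul1mx -(mulmxV Mu) -mulmxA -/y y0 mulmx0.
have := Mp y y0; rewrite /y trmx_mul trmx_inv MT -!mulmxA (mulmxA M) mulmxV //.
by rewrite mul1mx.
Qed.

Lemma complete_sq p1 p2 (M : 'M[R]_(p1 + p2)) (wp : 'cV_p1) (wo : 'cV_p2) :
  M^T = M -> ulsubmx M \in unitmx ->
  (col_mx wp wo)^T *m M *m col_mx wp wo =
  (wp + invmx (ulsubmx M) *m ursubmx M *m wo)^T *m ulsubmx M *m
    (wp + invmx (ulsubmx M) *m ursubmx M *m wo)
  + wo^T *m (drsubmx M - dlsubmx M *m invmx (ulsubmx M) *m ursubmx M) *m wo.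
Proof.
move=> MT Au; have [hA hc hb hD] := block_sym MT.
rewrite -mulmxA -{1}(submxK M).
set A := ulsubmx M in hA Au *; set b := ursubmx M in hc hb *;
set c := dlsubmx M in hc hb *; set Dm := drsubmx M in hD *.
set v := invmx A *m b *m wo.
have Av : A *m v = b *m wo by rewrite /v !mulmxA mulmxV // mul1mx.
have vA : v^T *m A = wo^T *m c by rewrite -hA -trmx_mul Av trmx_mul hb.
have cv : c *m invmx A *m b *m wo = c *m v by rewrite /v !mulmxA.
rewrite mul_block_col tr_col_mx mul_row_col !mulmxDr.
rewrite linearD /= !mulmxDl vA -(mulmxA wp^T A v) Av mulmxN mulNmx.
rewrite -(mulmxA wo^T (c *m invmx A *m b) wo) cv !mulmxA.
rewrite -!addrA; congr (_ + _); rewrite addrCA; congr (_ + _); congr (_ + _).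
by rewrite addrC subrK.
Qed.
End Gen.


Section Gen2.
Variable R : realType.

Lemma sum_delta_l N (F : 'I_N -> R) j : \sum_i (j == i)%:R * F i = F j.
Proof.
rewrite (bigD1 j) //= eqxx mul1r big1 ?addr0 // => i /negbTE.
by rewrite eq_sym => ->; rewrite mul0r.
Qed.

Lemma sum_delta_r N (F : 'I_N -> R) j : \sum_i F i * (j == i)%:R = F j.
Proof. by rewrite -[RHS](sum_delta_l F j); apply: eq_bigr => i _; rewrite mulrC. Qed.

Lemma entry_sym N (C : 'M[R]_N) i j : C^T = C -> C i j = C j i.
Proof. by move=> CT; rewrite -{1}CT mxE. Qed.

Lemma sub_posdef N k (f : 'I_k -> 'I_N) (C : 'M[R]_N) :
  injective f -> posdef C -> posdef (\matrix_(a, b) C (f a) (f b)).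
Proof.
move=> finj [CT Cp].
pose E : 'M[R]_(N, k) := \matrix_(j, a) (f a == j)%:R.
have EC : \matrix_(a, b) C (f a) (f b) = E^T *m C *m E.
  apply/matrixP=> a b; rewrite !mxE.
  under eq_bigr => j _ do rewrite !mxE.
  under eq_bigr => j _ do under eq_bigr => i _ do rewrite !mxE.
  under eq_bigr => j _ do rewrite sum_delta_l.
  by rewrite sum_delta_r.
split.
  by apply/matrixP=> a b; rewrite !mxE (entry_sym _ _ CT).
move=> x x0; rewrite EC.
have Ex0 : E *m x != 0.
  apply: contra_neq x0 => Ex; apply/matrixP=> a b; rewrite (ord1 b).
  have := congr1 (fun M : 'M[R]_(N, 1) => M (f a) 0) Ex; rewrite !mxE.
  under eq_bigr => i _ do rewrite mxE (inj_eq finj) eq_sym.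
  by rewrite sum_delta_l.
by have := Cp _ Ex0; rewrite trmx_mul !mulmxA.
Qed.

Lemma posdef_entry k (M : 'M[R]_k) i : posdef M -> 0 < M i i.
Proof.
case=> _ /(_ (delta_mx i 0)); rewrite trmx_delta -rowE -colE !mxE; apply.
apply/eqP => h; have := congr1 (fun M : 'M[R]_(k, 1) => M i 0) h.
by rewrite !mxE !eqxx /= => /eqP; rewrite oner_eq0.
Qed.

End Gen2.


Section Vec.
Variables (R : realType) (N m : nat) (Z : 'M[R]_(N, m)) (Sigma : 'M[R]_m)
  (sigma2 : R) (Nb : 'I_N -> {set 'I_N}).
Hypotheses (HS : psd Sigma) (Hs : 0 < sigma2)
  (HNb : forall i, Nb i \subset [set j : 'I_N | (j < i)%N]).

Lemma K_sym : (Kmat Z Sigma)^T = Kmat Z Sigma.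
Proof. by case: HS => ST _; rewrite /Kmat !trmx_mul trmxK ST mulmxA. Qed.

Lemma add_entry k1 k2 (A B : 'M[R]_(k1, k2)) a b : (A + B) a b = A a b + B a b.
Proof. by rewrite !mxE. Qed.
Lemma scl_entry k1 k2 (c : R) (A : 'M[R]_(k1, k2)) a b : (c *: A) a b = c * A a b.
Proof. by rewrite !mxE. Qed.

Lemma C_posdef : posdef (Cmat Z Sigma sigma2).
Proof.
split; first by rewrite /Cmat linearD /= K_sym tr_scalar_mx.
move=> x x0; rewrite /Cmat mulmxDr mulmxDl add_entry.
rewrite mul_mx_scalar -scalemxAl scl_entry ltr_wpDl //.
  by case: HS => _ /(_ (Z^T *m x)); rewrite /Kmat trmx_mul trmxK !mulmxA.
by rewrite mulr_gt0 // sumsq_gt0.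
Qed.

Lemma nbi_lt i (l : 'I_#|Nb i|) : (nbi l < i)%N.
Proof. by have := fintype.subsetP (HNb i) _ (enum_valP l); rewrite inE. Qed.

Lemma nbi_neq i (l : 'I_#|Nb i|) : (nbi l == i) = false.
Proof. by apply/negbTE; apply: contraTneq (nbi_lt l) => ->; rewrite ltnn. Qed.
Lemma nbi_neq' i (l : 'I_#|Nb i|) : (i == nbi l) = false.
Proof. by rewrite eq_sym nbi_neq. Qed.

Lemma nbi_inj i : injective (@nbi _ Nb i).
Proof. exact: enum_val_inj. Qed.

Lemma split_l k1 k2 (l : 'I_k1) : fintype.split (lshift k2 l) = inl l.
Proof. exact: (unsplitK (inl _ l)). Qed.
Lemma split_r k1 k2 (l : 'I_k2) : fintype.split (rshift k1 l) = inr l.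
Proof. exact: (unsplitK (inr _ l)). Qed.

Lemma sub_entry k1 k2 (A B : 'M[R]_(k1, k2)) a b : (A - B) a b = A a b - B a b.
Proof. by rewrite !mxE. Qed.

Lemma vD_pos i : 0 < vD Z Sigma sigma2 Nb i.
Proof.
set k := #|Nb i|.
pose f (a : 'I_(k + 1)) : 'I_N := match fintype.split a with inl l => nbi l | inr _ => i end.
have finj : injective f.
  move=> a b; rewrite /f -{2}(splitK a) -{2}(splitK b).
  case: (fintype.split a) => [l|u]; case: (fintype.split b) => [l'|u'] //=.
  - by move/nbi_inj => ->.
  - by move=> E; have := nbi_lt l; rewrite E ltnn.
  - by move=> E; have := nbi_lt l'; rewrite -E ltnn.
  - by rewrite (ord1 u) (ord1 u').
have pC := sub_posdef finj C_posdef.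
set Cf := \matrix_(a, b) _ in pC.
have pA := ul_posdef pC.
have [pS _] := schur pC (posdef_unit pA).
have := posdef_entry 0 pS; rewrite sub_entry.
have -> : ulsubmx Cf = \matrix_(l, l') Cmat Z Sigma sigma2 (nbi l) (nbi l').
  by apply/matrixP=> a b; rewrite !mxE /f !split_l.
have -> : dlsubmx Cf = \row_l Kmat Z Sigma i (nbi l).
  apply/matrixP=> a b; rewrite !mxE /f split_l split_r.
  by rewrite nbi_neq' mulr0n addr0.
have -> : ursubmx Cf = \col_l Kmat Z Sigma (nbi l) i.
  apply/matrixP=> a b; rewrite !mxE /f split_l split_r.
  by rewrite nbi_neq mulr0n addr0.
by rewrite /vD !mxE /f split_r.
Qed.

Lemma vB_le (i j : 'I_N) : (i <= j)%N -> vB Z Sigma sigma2 Nb i j = (i == j)%:R.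
Proof.
move=> ij; rewrite mxE big_pred0 ?subr0 // => l.
by apply/negbTE; apply: contraTneq (nbi_lt l) => ->; rewrite -leqNgt.
Qed.

Lemma vB_det : \det (vB Z Sigma sigma2 Nb) = 1.
Proof.
rewrite det_trig; first by apply: big1 => i _; rewrite vB_le // eqxx.
apply/is_trig_mxP => i j ij; rewrite vB_le ?(ltnW ij) //.
have /negbTE -> : i != j by apply: contraTneq ij => ->; rewrite ltnn.
by [].
Qed.

Lemma vD_neq0 i : vD Z Sigma sigma2 Nb i != 0.
Proof. by rewrite gt_eqF // vD_pos. Qed.

Lemma vDm_inv : invmx (vDm Z Sigma sigma2 Nb) =
  diag_mx (\row_i (vD Z Sigma sigma2 Nb i)^-1).
Proof.
have H : vDm Z Sigma sigma2 Nb *m diag_mx (\row_i (vD Z Sigma sigma2 Nb i)^-1) = 1%:M.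
  rewrite /vDm mulmx_diag -diag_const_mx; congr diag_mx.
  by apply/matrixP => a b; rewrite !mxE divff // vD_neq0.
have [U _] := mulmx1_unit H.
by rewrite -[invmx _]mulmx1 -H mulmxA mulVmx // mul1mx.
Qed.

Lemma vDm_unit : vDm Z Sigma sigma2 Nb \in unitmx.
Proof.
by rewrite unitmxE det_diag unitfE; apply/prodf_neq0 => i _; rewrite mxE vD_neq0.
Qed.

Lemma sum_pred1 (a : 'I_N) (F : 'I_N -> R) : \sum_(j | a == j) F j = F a.
Proof. by rewrite (big_pred1 a) // => j; rewrite /= eq_sym. Qed.

Lemma mulmx_entry k1 k2 k3 (A : 'M[R]_(k1, k2)) (B : 'M[R]_(k2, k3)) a b :
  (A *m B) a b = \sum_j A a j * B j b.
Proof. by rewrite mxE. Qed.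
Lemma col_entry k (f : 'I_k -> R) l : (\col_l0 f l0) l 0 = f l.
Proof. by rewrite mxE. Qed.
Lemma vB_entry i j : vB Z Sigma sigma2 Nb i j =
  (i == j)%:R - \sum_(l < #|Nb i| | nbi l == j) vA Z Sigma sigma2 Nb i 0 l.
Proof. by rewrite [LHS]mxE. Qed.

Lemma Bw (mu v : 'cV[R]_N) i :
  (vB Z Sigma sigma2 Nb *m (v - mu)) i 0 =
  v i 0 - (mu i 0 + (vA Z Sigma sigma2 Nb i *m
     \col_l (v (nbi l) 0 - mu (nbi l) 0)) 0 0).
Proof.
rewrite mulmx_entry; under eq_bigr => j _ do rewrite vB_entry mulrBl.
rewrite sumrB sum_delta_l.
under eq_bigr => j _ do rewrite mulr_suml.
rewrite (exchange_big_dep predT) //=.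
under eq_bigr => l _ do rewrite sum_pred1.
rewrite [in RHS]mulmx_entry.
under [in RHS]eq_bigr => l _ do rewrite col_entry.
under eq_bigr => l _ do rewrite sub_entry.
by rewrite sub_entry opprD addrA.
Qed.

Lemma row_entry k (f : 'I_k -> R) l : (\row_l0 f l0) 0 l = f l.
Proof. by rewrite mxE. Qed.
Lemma quad_diag k (u : 'cV[R]_k) (d : 'rV[R]_k) :
  (u^T *m diag_mx d *m u) 0 0 = \sum_i u i 0 ^+ 2 * d 0 i.
Proof.
rewrite mul_mx_diag mxE; apply: eq_bigr => i _; rewrite !mxE.
by rewrite mulrC mulrA expr2.
Qed.

Lemma dens (mu v : 'cV[R]_N) :
  vecchia_density Z Sigma sigma2 Nb mu v =
  (\prod_i (Num.sqrt (2 * pi * vD Z Sigma sigma2 Nb i))^-1) *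
  expR (- (1 / 2) * (((v - mu)^T *m vQ Z Sigma sigma2 Nb *m (v - mu)) 0 0)).
Proof.
rewrite /vecchia_density /gauss1 big_split /= -expR_sum; congr (_ * expR _).
have -> : (v - mu)^T *m vQ Z Sigma sigma2 Nb *m (v - mu)
  = (vB Z Sigma sigma2 Nb *m (v - mu))^T *m
    diag_mx (\row_i (vD Z Sigma sigma2 Nb i)^-1) *m (vB Z Sigma sigma2 Nb *m (v - mu)).
  by rewrite /vQ vDm_inv trmx_mul !mulmxA.
set u := vB Z Sigma sigma2 Nb *m (v - mu).
rewrite quad_diag mulr_sumr; apply: eq_bigr => i _.
rewrite /u Bw row_entry.
have := vD_neq0 i.
set r := (X in X ^+ 2); set D := vD _ _ _ _ i => D0.
by field.
Qed.

End Vec.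

Unset Implicit Arguments. Set Strict Implicit.

Lemma wsumsq_gt0 (R : realType) k (u : 'cV[R]_k) (d : 'rV[R]_k) :
  (forall i, 0 < d 0 i) -> u != 0 -> 0 < (u^T *m diag_mx d *m u) 0 0.
Proof.
move=> dp u0; have [i ui] : exists i, u i 0 != 0.
  apply/existsP; apply: contraR u0; rewrite negb_exists => /forallP H.
  apply/eqP/matrixP=> a b; rewrite (ord1 b) !mxE; exact/eqP/negPn/H.
rewrite quad_diag (bigD1 i) //= ltr_pwDl //.
  by rewrite mulr_gt0 // lt_def sqr_ge0 andbT sqrf_eq0 ui.
by apply: sumr_ge0 => j _; rewrite mulr_ge0 // ?sqr_ge0 // ltW.
Qed.

Theorem proposition4 (R : realType) (np n p d m mnb : nat)
  (F : 'rV[R]_p -> R) (X : 'M[R]_(n, p)) (Xp : 'M[R]_(np, p))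
  (s : 'I_(np + n) -> 'rV[R]_d)
  (Z : 'M[R]_(np + n, m)) (Sigma : 'M[R]_m) (sigma2 : R)
  (Nb : 'I_(np + n) -> {set 'I_(np + n)}) :
  psd Sigma -> 0 < sigma2 -> nn_sets s mnb Nb ->
  let B := vB Z Sigma sigma2 Nb in
  let D := vDm Z Sigma sigma2 Nb in
  let Bp : 'M[R]_np := ulsubmx B in
  let Bop : 'M[R]_(n, np) := dlsubmx B in
  let Bo : 'M[R]_n := drsubmx B in
  let Dp : 'M[R]_np := ulsubmx D in
  let Do : 'M[R]_n := drsubmx D in
  let Xi := invmx (Bp^T *m invmx Dp *m Bp + Bop^T *m invmx Do *m Bop) in
  let mu (y : 'cV[R]_n) :=
    fmean F Xp - Xi *m Bop^T *m invmx Do *m Bo *m (y - fmean F X) in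
  posdef Xi /\
  exists g : 'cV[R]_n -> R, forall (yp : 'cV[R]_np) (y : 'cV[R]_n),
    vecchia_density Z Sigma sigma2 Nb (col_mx (fmean F Xp) (fmean F X)) (col_mx yp y)
    = mvn_pdf (mu y) Xi yp * g y.
Proof.
move=> HS Hs HNn B D Bp Bop Bo Dp Do Xi mu.
have HNb : forall i, Nb i \subset [set j : 'I_(np + n) | (j < i)%N].
  by move=> i; case: (HNn i).
have Bur : ursubmx B = 0.
  apply/matrixP=> a b; rewrite [LHS]mxE [LHS]mxE [RHS]mxE /B vB_le //=.
    by rewrite eq_lrshift.
  by rewrite (leq_trans (ltnW (ltn_ord a))) ?leq_addr.
have EB : B = block_mx Bp 0 Bop Bo by rewrite -Bur submxK.
have ED : D = block_mx Dp 0 0 Do.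
  rewrite /Dp /Do /D /vDm -(hsubmxK (\row_i vD Z Sigma sigma2 Nb i)).
  by rewrite diag_mx_row block_mxKul block_mxKdr.
have invD : invmx D = block_mx (invmx Dp) 0 0 (invmx Do).
  by rewrite {1}ED invmx_block_diag // -ED vDm_unit.
pose Q := vQ Z Sigma sigma2 Nb.
have EQ : Q = B^T *m invmx D *m B by [].
have ulQ : ulsubmx Q = Bp^T *m invmx Dp *m Bp + Bop^T *m invmx Do *m Bop.
  rewrite EQ EB invD tr_block_mx trmx0 !mulmx_block block_mxKul.
  by rewrite !mulmx0 addr0 add0r.
have urQ : ursubmx Q = Bop^T *m invmx Do *m Bo.
  rewrite EQ EB invD tr_block_mx trmx0 !mulmx_block block_mxKur.
  by rewrite !mulmx0 !add0r ?addr0.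
have Bu : B \in unitmx by rewrite unitmxE /B vB_det // unitr1.
have QT : Q^T = Q by rewrite EQ !trmx_mul trmx_inv /D tr_diag_mx trmxK mulmxA.
have Qpd : posdef Q.
  split=> // x x0; rewrite EQ /D vDm_inv // !mulmxA.
  have -> : x^T *m B^T *m diag_mx (\row_i (vD Z Sigma sigma2 Nb i)^-1) *m B *m x =
    (B *m x)^T *m diag_mx (\row_i (vD Z Sigma sigma2 Nb i)^-1) *m (B *m x).
    by rewrite trmx_mul !mulmxA.
  apply: wsumsq_gt0.
    by move=> i; rewrite mxE invr_gt0 vD_pos.
  apply: contra_neq x0 => Bx.
  by rewrite -[x]mul1mx -(mulVmx Bu) -mulmxA Bx mulmx0.
have Ppd : posdef (ulsubmx Q) := ul_posdef Qpd.
have Pu : ulsubmx Q \in unitmx := posdef_unit Ppd.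
have EXi : Xi = invmx (ulsubmx Q) by rewrite ulQ.
have Xipd : posdef Xi by rewrite EXi; apply: inv_posdef.
split=> //.
have detXi : 0 < \det Xi by apply: posdef_det.
set S := drsubmx Q - dlsubmx Q *m Xi *m (Bop^T *m invmx Do *m Bo).
set c := \prod_i (Num.sqrt (2 * pi * vD Z Sigma sigma2 Nb i))^-1.
set sq := Num.sqrt ((2 * pi) ^+ np * \det Xi).
have sq0 : sq != 0.
  by rewrite gt_eqF // sqrtr_gt0 mulr_gt0 // exprn_gt0 // mulr_gt0 // pi_gt0.
exists (fun y => c * sq * expR (- (1 / 2) *
  (((y - fmean F X)^T *m S *m (y - fmean F X)) 0 0))).
move=> yp y; rewrite dens //.
rewrite opp_col_mx add_col_mx -/Q complete_sq // -EXi urQ.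
have -> : yp - fmean F Xp + Xi *m (Bop^T *m invmx Do *m Bo) *m (y - fmean F X)
    = yp - mu y.
  by rewrite /mu !mulmxA opprB addrA addrAC.
have iXi : invmx Xi = ulsubmx Q by rewrite EXi invmxK.
rewrite /mvn_pdf -/sq -/c -/S iXi add_entry mulrDr expRD.
field.
by [].
Qed.
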